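(* Let $C=U_d\cdots U_1$ be a Clifford circuit of depth $d$ on $n$ qubits and $\tilde{\mathcal C}=\mathcal E^{\otimes n}\circ\mathcal U_d\circ\mathcal E^{\otimes n}\circ\cdots\circ\mathcal U_1\circ\mathcal E^{\otimes n}$ its noisy implementation, with $\mathcal U_t(\cdot)=U_t(\cdot)U_t^\dagger$ and $\mathcal E(\sigma)=(1-\gamma)\sigma+\gamma\frac I2\operatorname{Tr}(\sigma)$. For $y\in\{0,1\}^n$ let $p_{\tilde{\mathcal C},y}(x)=\operatorname{Tr}(F_x\tilde{\mathcal C}(\lvert y\rangle\langle y\rvert))$, where $F_x=U^\dagger\lvert x\rangle\langle x\rvert U$ for an arbitrary fixed measurement basis given by a unitary $U$. Then when $d\ge O(\gamma^{-1}\log n)$, $$\mathbb E_{y\sim\{0,1\}^n}\sum_{x\in\{0,1\}^n}p_{\tilde{\mathcal C},y}(x)^2=\frac{O(1)}{2^n},$$ where $y$ is uniformly distributed.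
   Context: The Clifford group consists of unitaries mapping Pauli operators to Pauli operators under conjugation. *)

(* Defs.v *)
From HB Require Import structures.
From mathcomp Require Import all_boot all_order all_algebra.
From mathcomp Require Import complex.
From mathcomp Require Import reals exp.
Set Implicit Arguments. Unset Strict Implicit. Unset Printing Implicit Defensive.
Import Order.TTheory GRing.Theory Num.Theory.
Local Open Scope ring_scope.

Section Qubits.
Variable R : realType.
Local Notation C := (complex R).

Definition rC (x : R) : C := Complex x 0.
Definition imC : C := Complex 0 1.

(* n-qubit operators: matrices indexed by computational basis states
   'I_(2^n); the k-th qubit of basis state a is bit k of a. *)
Definition qbit (k : nat) (N : nat) (a : 'I_N) : bool := odd (a %/ 2 ^ k).

Definition adj (N : nat) (A : 'M[C]_N) : 'M[C]_N := (map_mx Num.conj A)^T.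

Definition unitary (N : nat) (A : 'M[C]_N) : Prop := A *m adj A = 1%:M.

(* single-qubit Pauli matrices: 0 = I, 1 = X, 2 = Y, 3 = Z *)
Definition pauli1 (s : 'I_4) (a b : bool) : C :=
  match val s with
  | 0 => if a == b then 1 else 0
  | 1 => if a != b then 1 else 0
  | 2 => if a == b then 0 else (if a then imC else - imC)
  | _ => if a == b then (if a then -1 else 1) else 0
  end.

(* n-qubit Pauli string s_0 (x) s_1 (x) ... (x) s_{n-1} (tensor product) *)
Definition pauli (n : nat) (s : 'I_n -> 'I_4) : 'M[C]_(2 ^ n) :=
  \matrix_(a, b) \prod_(k < n) pauli1 (s k) (qbit k a) (qbit k b).

Definition clifford (n : nat) (U : 'M[C]_(2 ^ n)) : Prop :=
  unitary U /\
  forall s : 'I_n -> 'I_4, exists (s' : 'I_n -> 'I_4) (w : C),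
    w ^+ 4 = 1 /\ U *m pauli s *m adj U = w *: pauli s'.

(* single-qubit depolarizing channel E(sig) = (1-g) sig + g I/2 Tr sig,
   written as its superoperator kernel: E(sig)(a',b') = sum_{a,b} K a' b' a b sig(a,b) *)
Definition depol_kernel (g : R) (a' b' a b : bool) : C :=
  rC (1 - g) * (if (a' == a) && (b' == b) then 1 else 0)
  + rC (g / 2) * (if (a' == b') && (a == b) then 1 else 0).

(* n-fold tensor product E^{(x) n} of the single-qubit channel *)
Definition depol_n (n : nat) (g : R) (rho : 'M[C]_(2 ^ n)) : 'M[C]_(2 ^ n) :=
  \matrix_(a', b') \sum_(a < 2 ^ n) \sum_(b < 2 ^ n)
     (\prod_(k < n) depol_kernel g (qbit k a') (qbit k b') (qbit k a) (qbit k b))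
     * rho a b.

Definition uconj (N : nat) (U rho : 'M[C]_N) : 'M[C]_N := U *m rho *m adj U.

(* noisy circuit E o U_t o E o ... o U_1 o E applied to rho, for t layers;
   the gates are Us 1, ..., Us d. *)
Fixpoint noisy (n : nat) (g : R) (Us : nat -> 'M[C]_(2 ^ n)) (t : nat)
  (rho : 'M[C]_(2 ^ n)) : 'M[C]_(2 ^ n) :=
  match t with
  | 0 => depol_n g rho
  | t'.+1 => depol_n g (uconj (Us t'.+1) (noisy g Us t' rho))
  end.

Definition ket_bra (N : nat) (y : 'I_N) : 'M[C]_N := delta_mx y y.

Definition outprob (n : nat) (g : R) (Us : nat -> 'M[C]_(2 ^ n)) (d : nat)
  (U : 'M[C]_(2 ^ n)) (y x : 'I_(2 ^ n)) : C :=
  \tr (adj U *m ket_bra x *m U *m noisy g Us d (ket_bra y)).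

Definition avg_collision (n : nat) (g : R) (Us : nat -> 'M[C]_(2 ^ n)) (d : nat)
  (U : 'M[C]_(2 ^ n)) : C :=
  (2 ^ n)%:R^-1 * \sum_(y < 2 ^ n) \sum_(x < 2 ^ n) outprob g Us d U y x ^+ 2.

End Qubits.

(* Main.v *)
Require Import Defs.
From HB Require Import structures.
From mathcomp Require Import all_boot all_order all_algebra.
From mathcomp Require Import complex.
From mathcomp Require Import reals exp sequences boolp.
From mathcomp Require Import ring lra zify.
Set Implicit Arguments. Unset Strict Implicit. Unset Printing Implicit Defensive.
Import Order.TTheory GRing.Theory Num.Theory.
Local Open Scope ring_scope.


Lemma qbit_inj_nat (n a b : nat) : (a < 2 ^ n)%N -> (b < 2 ^ n)%N ->
  (forall k, (k < n)%N -> odd (a %/ 2 ^ k)%N = odd (b %/ 2 ^ k)%N) -> a = b.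
Proof.
elim: n a b => [|n IH] a b.
  by rewrite expn0 !ltnS !leqn0 => /eqP -> /eqP ->.
move=> ha hb H.
have h0 := H 0%N isT; rewrite !expn0 !divn1 in h0.
have hh : (a %/ 2 = b %/ 2)%N.
  apply: IH.
  - by rewrite ltn_divLR // -expnSr.
  - by rewrite ltn_divLR // -expnSr.
  move=> k hk; have := H k.+1 hk.
  by rewrite expnS !divnMA.
by rewrite (divn_eq a 2) (divn_eq b 2) hh !modn2 h0.
Qed.

Section S.
Variable n : nat.

Definition bitsv (a : 'I_(2 ^ n)) : {ffun 'I_n -> bool} := [ffun k : 'I_n => qbit k a].

Lemma bitsv_inj : injective bitsv.
Proof.
move=> a b H; apply: val_inj; apply: qbit_inj_nat (ltn_ord a) (ltn_ord b) _.
move=> k hk; have := congr1 (fun f : {ffun 'I_n -> bool} => f (Ordinal hk)) H.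
by rewrite !ffunE.
Qed.

Lemma bitsv_bij : bijective bitsv.
Proof.
apply: (@inj_card_bij _ _ bitsv bitsv_inj).
rewrite card_ffun card_bool !card_ord. done.
Qed.

Lemma sum_bits (V : nmodType) (F : {ffun 'I_n -> bool} -> V) :
  \sum_(a < 2 ^ n) F (bitsv a) = \sum_v F v.
Proof.
have [h hK Kh] := bitsv_bij.
rewrite (reindex h) /=; last by exists bitsv => x _ //.
by apply: eq_bigr => v _; rewrite Kh.
Qed.

Lemma prod_sum_bits (T : comPzSemiRingType) (f : 'I_n -> bool -> T) :
  \sum_(a < 2 ^ n) \prod_(k < n) f k (qbit k a) =
  \prod_(k < n) (f k false + f k true).
Proof.
transitivity (\sum_(a < 2 ^ n) (fun v => \prod_(k < n) f k (v k)) (bitsv a)).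
  by apply: eq_bigr => a _ /=; apply: eq_bigr => k _; rewrite ffunE.
rewrite (sum_bits (fun v : {ffun 'I_n -> bool} => \prod_(k < n) f k (v k))) -bigA_distr_bigA /=.
by apply: eq_bigr => k _; rewrite big_bool addrC.
Qed.

Lemma qbit_eq_prod (T : comPzSemiRingType) (a b : 'I_(2 ^ n)) :
  \prod_(k < n) (if qbit k a == qbit k b then (1 : T) else 0) = (a == b)%:R.
Proof.
case: eqP => [->|neq].
  by rewrite big1 // => k _; rewrite eqxx.
have : exists k : 'I_n, qbit k a != qbit k b.
  apply/existsP; apply: contraT; rewrite negb_exists => /forallP Hk.
  case: neq; apply: bitsv_inj; apply/ffunP => k; rewrite !ffunE.
  by have := Hk k; rewrite negbK => /eqP.
case=> k /negbTE hk. rewrite (bigD1 k) //= hk mul0r //.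
Qed.
End S.


Section Q.
Variable R : realType.
Local Notation C := (complex R).
Local Notation p1 := (pauli1 R).

Lemma imC2 : imC R * imC R = -1.
Proof. by apply/eqP; rewrite /imC eq_complex /= !mul0r !mulr0 mulr1 sub0r add0r oppr0 !eqxx. Qed.

Lemma conj_imC : Num.conj (imC R) = - imC R.
Proof. by apply/eqP; rewrite /imC eq_complex /= oppr0 !eqxx. Qed.

Lemma conj_NimC : Num.conj (- imC R) = imC R.
Proof. by apply/eqP; rewrite /imC eq_complex /= !oppr0 opprK !eqxx. Qed.

Lemma conj_N1 : Num.conj (-1 : C) = -1.
Proof. by rewrite rmorphN rmorph1. Qed.

Lemma ord4_cases (P : 'I_4 -> Prop) : P (@Ordinal 4 0 isT) -> P (@Ordinal 4 1 isT) ->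
  P (@Ordinal 4 2 isT) -> P (@Ordinal 4 3 isT) -> forall s, P s.
Proof.
move=> h0 h1 h2 h3 [[|[|[|[|m]]]] hm] //.
- by have -> : Ordinal hm = @Ordinal 4 0 isT by apply: val_inj.
- by have -> : Ordinal hm = @Ordinal 4 1 isT by apply: val_inj.
- by have -> : Ordinal hm = @Ordinal 4 2 isT by apply: val_inj.
- by have -> : Ordinal hm = @Ordinal 4 3 isT by apply: val_inj.
Qed.

Ltac qsimp := rewrite /= ?rmorph0 ?rmorph1 ?conj_NimC ?conj_N1 ?conj_imC ?opprK ?mulr0 ?mul0r ?mulr1 ?mul1r ?mulrN ?mulNr ?imC2 ?opprK ?addr0 ?add0r ?oppr0.


Lemma p1_conj (s : 'I_4) a b : Num.conj (p1 s a b) = p1 s b a.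
Proof.
elim/ord4_cases: s; rewrite /pauli1 /=;
  case: a; case: b; qsimp => //.
Qed.

Lemma p1_compl a b a' b' :
  \sum_(s < 4) Num.conj (p1 s a b) * p1 s a' b' =
  if (a == a') && (b == b') then 2 else 0.
Proof.
rewrite !big_ord_recr big_ord0 /= /pauli1 /=.
case: a; case: b; case: a'; case: b'; do 3 qsimp; rewrite ?subrr //.
Qed.

Lemma p1_orth (s t : 'I_4) :
  (Num.conj (p1 s false false) * p1 t false false + Num.conj (p1 s true false) * p1 t true false)
  + (Num.conj (p1 s false true) * p1 t false true + Num.conj (p1 s true true) * p1 t true true)
  = if s == t then 2 else 0.
Proof.
elim/ord4_cases: s; elim/ord4_cases: t; rewrite /pauli1 /=; do 3 qsimp; rewrite ?subrr ?addNr //.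
Qed.

Lemma rCE (x : R) : rC x = real_complex R x.
Proof. by []. Qed.

Lemma two_neq0 : (2 : C) != 0.
Proof. by rewrite pnatr_eq0. Qed.

Lemma p1_depol (g : R) (s : 'I_4) a b :
  let F i j := Num.conj (p1 s j i) * depol_kernel g j i a b in
  (F false false + F false true) + (F true false + F true true) =
  (if s == ord0 then 1 else rC (1 - g)) * Num.conj (p1 s a b).
Proof.
rewrite /depol_kernel !rCE rmorphB rmorph1 fmorph_div rmorph_nat.
have h2 := two_neq0.
elim/ord4_cases: s; rewrite /pauli1 /=; case: a; case: b; do 3 qsimp => /=; idtac. all: try field. all: done.
Qed.
End Q.


Section M.
Variable R : realType.
Variable n : nat.
Local Notation C := (complex R).
Local Notation p1 := (pauli1 R).
Local Notation N := (2 ^ n)%N.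
Local Notation S := {ffun 'I_n -> 'I_4}.
Local Notation P s := (pauli R (fun k => s k)).

Definition coef (s : S) (A : 'M[C]_N) := \tr (adj (P s) *m A).

Lemma tr_adj_mul (A B : 'M[C]_N) :
  \tr (adj A *m B) = \sum_i \sum_j Num.conj (A j i) * B j i.
Proof.
rewrite /mxtrace; apply: eq_bigr => i _; rewrite mxE; apply: eq_bigr => j _.
by rewrite /adj !mxE.
Qed.

Lemma tr_mul_adj (A : 'M[C]_N) :
  \tr (A *m adj A) = \sum_i \sum_j A i j * Num.conj (A i j).
Proof.
rewrite /mxtrace; apply: eq_bigr => i _; rewrite mxE; apply: eq_bigr => j _.
by rewrite /adj !mxE.
Qed.

Lemma pauliE (s : S) a b : P s a b = \prod_(k < n) p1 (s k) (qbit k a) (qbit k b).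
Proof. by rewrite mxE. Qed.

Lemma sum_delta (F : 'I_N -> C) (i : 'I_N) :
  \sum_k F k * (i == k)%:R = F i.
Proof.
rewrite (bigD1 i) //= eqxx mulr1 big1 ?addr0 // => k /negbTE.
by rewrite eq_sym => ->; rewrite mulr0.
Qed.

Lemma pauli_orth (s t : S) :
  \tr (adj (P s) *m P t) = (N%:R : C) * (s == t)%:R.
Proof.
rewrite tr_adj_mul.
under eq_bigr => i _ do under eq_bigr => j _ do
  rewrite !pauliE rmorph_prod -big_split /=.
under eq_bigr => i _ do rewrite (prod_sum_bits (fun k b =>
   Num.conj (p1 (s k) b (qbit k i)) * p1 (t k) b (qbit k i))).
rewrite (prod_sum_bits (fun k a =>
   Num.conj (p1 (s k) false a) * p1 (t k) false a +
   Num.conj (p1 (s k) true a) * p1 (t k) true a)).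
under eq_bigr => k _ do rewrite p1_orth.
case: eqP => [->|neq].
  under eq_bigr => k _ do rewrite eqxx.
  by rewrite prodr_const card_ord natrX mulr1.
have [k hk] : exists k, s k != t k.
  apply/existsP; apply: contraT; rewrite negb_exists => /forallP Hk.
  by case: neq; apply/ffunP => k; have := Hk k; rewrite negbK => /eqP.
by rewrite (bigD1 k) //= (negbTE hk) mul0r mulr0.
Qed.

Lemma pauli_compl (i j k l : 'I_N) :
  \sum_(s : S) Num.conj (P s i j) * P s k l = (N%:R : C) * ((i == k) && (j == l))%:R.
Proof.
under eq_bigr => s _ do rewrite !pauliE rmorph_prod -big_split /=.
rewrite -(bigA_distr_bigA (fun (m : 'I_n) (x : 'I_4) =>
  Num.conj (p1 x (qbit m i) (qbit m j)) * p1 x (qbit m k) (qbit m l))) /=.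
under eq_bigr => m _ do rewrite p1_compl.
transitivity (\prod_(m < n) ((2 : C) * ((if qbit m i == qbit m k then 1 else 0) *
   (if qbit m j == qbit m l then 1 else 0)))).
  apply: eq_bigr => m _; case: (qbit m i == qbit m k); case: (qbit m j == qbit m l); rewrite /= ?mulr0 ?mul0r ?mulr1. all: rewrite ?mulr0 ?mul0r ?mulr1 //.
rewrite !big_split /= prodr_const card_ord natrX !qbit_eq_prod.
by rewrite -natrM mulnb.
Qed.

Lemma sum_delta_gen (I : finType) (F : I -> C) (i : I) :
  \sum_k F k * (i == k)%:R = F i.
Proof.
rewrite (bigD1 i) //= eqxx mulr1 big1 ?addr0 // => k /negbTE.
by rewrite eq_sym => ->; rewrite mulr0.
Qed.

Lemma coef_pair (s : S) (A : 'M[C]_N) :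
  coef s A = \sum_(p : 'I_N * 'I_N) Num.conj (P s p.2 p.1) * A p.2 p.1.
Proof. by rewrite /coef tr_adj_mul pair_big. Qed.

Lemma tr_pair (A : 'M[C]_N) :
  \tr (A *m adj A) = \sum_(p : 'I_N * 'I_N) A p.2 p.1 * Num.conj (A p.2 p.1).
Proof. by rewrite tr_mul_adj exchange_big pair_big. Qed.

Lemma pair_eq2 (p q : 'I_N * 'I_N) : ((p.2 == q.2) && (p.1 == q.1)) = (p == q).
Proof. by case: p => a b; case: q => c d; rewrite xpair_eqE andbC. Qed.

Lemma parseval (A : 'M[C]_N) :
  \sum_(s : S) coef s A * Num.conj (coef s A) = (N%:R : C) * \tr (A *m adj A).
Proof.
under eq_bigr => s _ do rewrite coef_pair rmorph_sum mulr_suml.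
under eq_bigr => s _ do under eq_bigr => p _ do rewrite mulr_sumr.
rewrite exchange_big; under eq_bigr => p _ do rewrite exchange_big.
rewrite tr_pair mulr_sumr; apply: eq_bigr => p _.
transitivity (\sum_(q : 'I_N * 'I_N) (A p.2 p.1 * Num.conj (A q.2 q.1)) *
    ((N%:R : C) * (p == q)%:R)).
  apply: eq_bigr => q _.
  rewrite -pair_eq2 -pauli_compl big_distrr /=; apply: eq_bigr => s _.
  rewrite !rmorphM /= conjCK; ring.
under eq_bigr => q _ do rewrite mulrA.
by rewrite sum_delta_gen mulrC.
Qed.

Definition wt (x : R) (s : S) : R := \prod_(k < n) (if s k == ord0 then 1 else x).

Lemma kernel_sum (g : R) (s : S) (a b : 'I_N) :
  \sum_i \sum_j Num.conj (P s j i) *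
     \prod_(k < n) depol_kernel g (qbit k j) (qbit k i) (qbit k a) (qbit k b)
  = rC (wt (1 - g) s) * Num.conj (P s a b).
Proof.
under eq_bigr => i _ do under eq_bigr => j _ do
  rewrite pauliE rmorph_prod -big_split /=.
under eq_bigr => i _ do rewrite (prod_sum_bits (fun k x =>
   Num.conj (p1 (s k) x (qbit k i)) * depol_kernel g x (qbit k i) (qbit k a) (qbit k b))).
rewrite (prod_sum_bits (fun k y =>
   Num.conj (p1 (s k) false y) * depol_kernel g false y (qbit k a) (qbit k b) +
   Num.conj (p1 (s k) true y) * depol_kernel g true y (qbit k a) (qbit k b))).
under eq_bigr => k _ do rewrite (p1_depol g (s k) (qbit k a) (qbit k b)).
rewrite big_split /= pauliE [X in _ = _ * X]rmorph_prod /wt [rC (\prod_(k < n) _)]rCE [X in _ = X * _]rmorph_prod; congr (_ * _).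
by apply: eq_bigr => k _; case: ifP; rewrite ?rmorph1 // -rCE.
Qed.

Lemma depolE (g : R) (A : 'M[C]_N) i j :
  depol_n g A i j = \sum_(a < N) \sum_(b < N)
     (\prod_(k < n) depol_kernel g (qbit k i) (qbit k j) (qbit k a) (qbit k b)) * A a b.
Proof. by rewrite mxE. Qed.

Lemma coef_depol (g : R) (s : S) (A : 'M[C]_N) :
  coef s (depol_n g A) = rC (wt (1 - g) s) * coef s A.
Proof.
rewrite /coef !tr_adj_mul.
under eq_bigr => i _ do under eq_bigr => j _ do rewrite depolE big_distrr /=.
under eq_bigr => i _ do under eq_bigr => j _ do under eq_bigr => a _ do
  rewrite big_distrr /=.
under eq_bigr => i _ do under eq_bigr => j _ do rewrite pair_big /=.
rewrite pair_big /= exchange_big /=.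
rewrite [X in _ = _ * X]exchange_big [X in _ = _ * X]pair_big big_distrr /=; apply: eq_bigr => q _.
transitivity (A q.1 q.2 * \sum_i \sum_j Num.conj (P s j i) *
     \prod_(k < n) depol_kernel g (qbit k j) (qbit k i) (qbit k q.1) (qbit k q.2)).
  rewrite pair_bigA big_distrr /=; apply: eq_bigr => p _; ring.
by rewrite kernel_sum; ring.
Qed.
End M.


Section M.
Variable R : realType.
Local Notation C := (complex R).

Lemma adj_mul m (A B : 'M[C]_m) : adj (A *m B) = adj B *m adj A.
Proof.
apply/matrixP => i j; rewrite !mxE rmorph_sum; apply: eq_bigr => k _.
by rewrite !mxE rmorphM mulrC.
Qed.

Lemma adjE m (A : 'M[C]_m) i j : adj A i j = Num.conj (A j i).
Proof. by rewrite !mxE. Qed.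

Lemma adjK m (A : 'M[C]_m) : adj (adj A) = A.
Proof. by apply/matrixP => i j; rewrite !mxE conjCK. Qed.

Lemma adjZ m (c : C) (A : 'M[C]_m) : adj (c *: A) = Num.conj c *: adj A.
Proof. by apply/matrixP => i j; rewrite !mxE rmorphM. Qed.

Lemma unitaryV m (U : 'M[C]_m) : unitary U -> adj U *m U = 1%:M.
Proof. by move=> hU; apply: mulmx1C. Qed.

Variable n : nat.
Local Notation p1 := (pauli1 R).
Local Notation N := (2 ^ n)%N.
Local Notation S := {ffun 'I_n -> 'I_4}.
Local Notation P s := (pauli R (fun k => s k)).

Definition nsq (z : C) := z * Num.conj z.

Lemma N_neq0 : (N%:R : C) != 0.
Proof. by rewrite pnatr_eq0 -lt0n expn_gt0. Qed.

Lemma norm_w (w : C) : w ^+ 4 = 1 -> w * Num.conj w = 1.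
Proof.
move=> h; apply/eqP; rewrite -(@pexpr_eq1 _ _ 4) //; last exact: mul_conjC_ge0.
by rewrite exprMn -rmorphXn h rmorph1 mulr1.
Qed.

Lemma coef_conj_unit (U : 'M[C]_N) (s t : S) (w : C) (A : 'M[C]_N) :
  unitary U -> w ^+ 4 = 1 -> U *m P s *m adj U = w *: P t ->
  nsq (coef t (uconj U A)) = nsq (coef s A).
Proof.
move=> hU hw hP.
have wn : w * Num.conj w = 1 := norm_w hw.
have cw0 : Num.conj w != 0.
  by apply/eqP => h; move: wn; rewrite h mulr0 => /eqP; rewrite eq_sym oner_eq0.
have hadj : adj (P t) = (Num.conj w)^-1 *: (U *m adj (P s) *m adj U).
  have := congr1 (@adj R N) hP; rewrite adjZ !adj_mul adjK mulmxA => ->.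
  by rewrite scalerA mulVf // scale1r.
have -> : coef t (uconj U A) = (Num.conj w)^-1 * coef s A.
  rewrite /coef hadj -scalemxAl mxtraceZ /uconj; congr (_ * _).
  rewrite !mulmxA -(mulmxA (U *m adj (P s))) unitaryV // mulmx1.
  rewrite mxtrace_mulC !mulmxA unitaryV // mul1mx //.
have e : Num.conj ((Num.conj w)^-1) = w^-1.
  by rewrite fmorphV; congr (_^-1); exact: conjCK.
rewrite /nsq rmorphM /= e.
by rewrite mulrACA -invfM [w^* * w]mulrC wn invr1 mul1r.
Qed.

Lemma conj_back (U X : 'M[C]_N) : unitary U -> adj U *m (U *m X *m adj U) *m U = X.
Proof.
move=> hU; rewrite !mulmxA unitaryV // mul1mx -mulmxA unitaryV // mulmx1 //.
Qed.

Lemma w_neq0 (w : C) : w ^+ 4 = 1 -> w != 0.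
Proof. by move=> h; apply/eqP => e; move: h; rewrite e expr0n /= => /eqP; rewrite eq_sym oner_eq0. Qed.

Lemma clifford_perm (U : 'M[C]_N) : clifford U ->
  exists ph : S -> S, injective ph /\
    forall s A, nsq (coef (ph s) (uconj U A)) = nsq (coef s A).
Proof.
case=> hU hC.
have H' : forall s : S, exists tw : S * C,
    tw.2 ^+ 4 = 1 /\ U *m P s *m adj U = tw.2 *: P tw.1.
  move=> s; have [s' [w [h1 h2]]] := hC (fun k => s k).
  exists ([ffun k => s' k], w); split => //=; rewrite h2; congr (_ *: _).
  by congr pauli; apply: funext => k; rewrite ffunE.
have [f Hf] := boolp.choice H'.
exists (fun s => (f s).1); split; last first.
  by move=> s A; have [h1 e1] := Hf s; exact: coef_conj_unit hU h1 e1.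
move=> s1 s2 e.
have [h1 e1] := Hf s1; have [h2 e2] := Hf s2.
set t := (f s1).1 in e e1; set w1 := (f s1).2 in h1 e1; set w2 := (f s2).2 in h2 e2.
rewrite -e -/t in e2.
have b1 := conj_back (P s1) hU; have b2 := conj_back (P s2) hU.
rewrite e1 -scalemxAr -scalemxAl in b1.
rewrite e2 -scalemxAr -scalemxAl in b2.
have hw2 := w_neq0 h2.
have E : P s1 = (w1 / w2) *: P s2.
  by rewrite -b1 -b2 scalerA mulrVK // unitfE.
have o1 := @pauli_orth R n s1 s1; have o2 := @pauli_orth R n s1 s2.
rewrite {2}E -scalemxAr mxtraceZ o2 eqxx mulr1 in o1.
case: eqP o1 => // _; rewrite mulr0 mulr0 => /eqP; rewrite eq_sym (negbTE N_neq0) //.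
Qed.

Lemma conj_rC (x : R) : Num.conj (rC x) = rC x.
Proof. by apply/eqP; rewrite /rC eq_complex /= oppr0 !eqxx. Qed.

Lemma kernel_real (g : R) a b c d : depol_kernel g a b c d =
  rC ((1 - g) * ((a == c) && (b == d))%:R + g / 2 * ((a == b) && (c == d))%:R).
Proof. rewrite /depol_kernel !rCE [in RHS]rmorphD !rmorphM !rmorph_nat. by case: ((a == c) && (b == d)); case: ((a == b) && (c == d)). Qed.

Lemma kernel_conj (g : R) a b c d :
  Num.conj (depol_kernel g a b c d) = depol_kernel g b a d c.
Proof.
rewrite !kernel_real conj_rC; congr (rC (_ * _%:R + _ * _%:R)).
  by rewrite andbC.
by rewrite eq_sym [d == c]eq_sym.
Qed.

Lemma herm_depol (g : R) (A : 'M[C]_N) : adj A = A -> adj (depol_n g A) = depol_n g A.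
Proof.
move=> hA; apply/matrixP => i j.
rewrite adjE depolE depolE rmorph_sum exchange_big /=; apply: eq_bigr => a _.
rewrite rmorph_sum; apply: eq_bigr => b _.
rewrite rmorphM rmorph_prod /=; congr (_ * _).
  by apply: eq_bigr => k _; rewrite kernel_conj.
by rewrite -{2}hA adjE.
Qed.

Lemma herm_uconj (U A : 'M[C]_N) : adj A = A -> adj (uconj U A) = uconj U A.
Proof. by move=> hA; rewrite /uconj !adj_mul adjK hA mulmxA. Qed.

Lemma herm_ket (y : 'I_N) : adj ((@ket_bra R _ y)) = (@ket_bra R _ y).
Proof.
apply/matrixP => i j; rewrite /ket_bra !mxE conjC_nat.
by rewrite andbC.
Qed.

Lemma herm_noisy (g : R) Us t (y : 'I_N) : adj (noisy g Us t ((@ket_bra R _ y))) = noisy g Us t ((@ket_bra R _ y)).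
Proof.
elim: t => [|t IH] /=; first by apply: herm_depol; exact: herm_ket.
by apply: herm_depol; apply: herm_uconj.
Qed.

Lemma tr_delta (x : 'I_N) (B : 'M[C]_N) : \tr ((@ket_bra R _ x) *m B) = B x x.
Proof.
rewrite /mxtrace (bigD1 x) //= big1 ?addr0.
  rewrite mxE (bigD1 x) //= big1 ?addr0 /ket_bra; first by rewrite mxE !eqxx mul1r.
  by move=> j /negbTE hj; rewrite mxE hj andbF mul0r.
move=> i /negbTE hi; rewrite mxE big1 // => j _; rewrite mxE hi /= mul0r //.
Qed.

Lemma outprobE (g : R) Us d (U : 'M[C]_N) (y x : 'I_N) :
  outprob g Us d U y x = uconj U (noisy g Us d ((@ket_bra R _ y))) x x.
Proof.
rewrite /outprob /uconj -tr_delta -!mulmxA mxtrace_mulC !mulmxA //.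
Qed.

Lemma tr_uconj (U A : 'M[C]_N) : unitary U ->
  \tr (uconj U A *m adj (uconj U A)) = \tr (A *m adj A).
Proof.
move=> hU; rewrite /uconj !adj_mul adjK !mulmxA -(mulmxA (U *m A)) unitaryV // mulmx1.
by rewrite mxtrace_mulC !mulmxA unitaryV // mul1mx.
Qed.

Lemma collision_bound (U A : 'M[C]_N) : unitary U -> adj A = A ->
  \sum_x (uconj U A x x) ^+ 2 <= (N%:R)^-1 * \sum_(s : S) nsq (coef s A).
Proof.
move=> hU hA; set B := uconj U A.
have hB : adj B = B by apply: herm_uconj.
rewrite /nsq parseval mulrA mulVf ?N_neq0 // mul1r -(tr_uconj A hU) -/B tr_mul_adj.
apply: ler_sum => x _.
have -> : B x x ^+ 2 = B x x * Num.conj (B x x).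
  by rewrite expr2; congr (_ * _); rewrite -{1}hB !mxE.
rewrite (bigD1 x) //= lerDl; apply: sumr_ge0 => j _; exact: mul_conjC_ge0.
Qed.
End M.


Section Real.
Variable R : realType.
Variable n : nat.
Local Notation S := {ffun 'I_n -> 'I_4}.
Local Notation wt := (@wt R n).

Lemma wt_ge0 (x : R) s : 0 <= x -> 0 <= wt x s.
Proof. by move=> hx; apply: prodr_ge0 => k _; case: ifP. Qed.

Lemma wtX (x : R) s m : wt x s ^+ m = wt (x ^+ m) s.
Proof.
rewrite /wt -prodrXl; apply: eq_bigr => k _; case: ifP => // _; exact: expr1n.
Qed.

Lemma sum_wt (x : R) : \sum_(s : S) wt x s = (1 + x *+ 3) ^+ n.
Proof.
rewrite /wt -(bigA_distr_bigA (fun (k : 'I_n) (j : 'I_4) => if j == ord0 then 1 else x)) /=.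
rewrite prodr_const card_ord; congr (_ ^+ _).
by rewrite !big_ord_recr big_ord0 /= add0r -!addrA.
Qed.

Lemma AGM_pow (m : nat) (a : 'I_m.+1 -> R) : (forall j, 0 <= a j) ->
  \prod_j a j <= (m.+1%:R)^-1 * \sum_j a j ^+ m.+1.
Proof.
move=> ha.
have H := (@leif_AGM R 'I_m.+1 predT (fun j => a j ^+ m.+1) (fun j _ => exprn_ge0 _ (ha j))).1.
have hc : #|(predT : {pred 'I_m.+1})| = m.+1 by rewrite card_ord.
rewrite hc /= prodrXl in H.
rewrite mulrC -(ler_pXn2r (ltn0Sn m)) //; last first.
  by rewrite nnegrE mulr_ge0 // ?invr_ge0 // sumr_ge0 // => j _; exact: exprn_ge0.
by rewrite nnegrE prodr_ge0.
Qed.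

Lemma traj_bound (x : R) (d : nat) (sig : nat -> S -> S) : 0 <= x ->
  (forall j, (j <= d)%N -> injective (sig j)) ->
  \sum_(s : S) \prod_(j < d.+1) wt x (sig j s) <= (1 + (x ^+ d.+1) *+ 3) ^+ n.
Proof.
move=> hx hinj.
apply: le_trans (_ : \sum_s (d.+1%:R)^-1 * \sum_(j < d.+1) wt x (sig j s) ^+ d.+1 <= _).
  apply: ler_sum => s _; have H := (AGM_pow (m:=d) (a:=fun j : 'I_d.+1 => wt x (sig j s))). apply: H => j.
  by apply: wt_ge0.
rewrite -mulr_sumr exchange_big /=.
under eq_bigr => j _ do under eq_bigr => s _ do rewrite wtX.
have E : forall j : 'I_d.+1, \sum_(s : S) wt (x ^+ d.+1) (sig j s) = (1 + (x ^+ d.+1) *+ 3) ^+ n.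
  move=> j; rewrite -sum_wt.
  by rewrite -(@reindex_inj _ _ _ _ (sig j) predT (fun s => wt (x ^+ d.+1) s) (hinj j (ltn_ord j))).
under eq_bigr => j _ do rewrite E.
rewrite sumr_const card_ord -(mulr_natl ((1 + x ^+ d.+1 *+ 3) ^+ n) d.+1) mulrA mulVf ?mul1r ?pnatr_eq0 //.
Qed.
End Real.

Lemma exp_bound (R : realType) (n : nat) (g : R) (d : nat) :
  (0 < n)%N -> 0 < g -> g <= 1 -> 1 * ln (n%:R) / g <= d%:R ->
  (1 + (((1 - g) ^+ 2) ^+ d.+1) *+ 3) ^+ n <= expR 3.
Proof.
move=> hn hg hg1 hd.
have hn0 : (0 : R) < n%:R by rewrite ltr0n.
have h0 : 0 <= 1 - g by lra.
have h1 : 1 - g <= 1 by lra.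
have hmu : ((1 - g) ^+ 2) ^+ d.+1 <= (n%:R)^-1.
  apply: le_trans (_ : (1 - g) ^+ d <= _).
    by rewrite -exprM; apply: ler_wiXn2l => //; lia.
  apply: le_trans (_ : expR (- g) ^+ d <= _).
    by apply: lerXn2r; rewrite ?nnegrE ?expR_ge0 //; have := expR_ge1Dx (- g); lra.
  rewrite -expRM_natr -(lnK (x:=n%:R)) ?posrE // -expRN ler_expR.
  rewrite mul1r ler_pdivrMr // in hd; lra.
have hmu0 : 0 <= ((1 - g) ^+ 2) ^+ d.+1 by apply: exprn_ge0; apply: sqr_ge0.
apply: le_trans (_ : (1 + (n%:R)^-1 *+ 3) ^+ n <= _).
  apply: lerXn2r; rewrite ?nnegrE; [ | | ]; try (rewrite addr_ge0 // mulrn_wge0 //).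
  - by rewrite invr_ge0 ltW.
  - by rewrite lerD2l lerMn2r.
apply: le_trans (_ : expR (3 / n%:R) ^+ n <= _).
  apply: lerXn2r; rewrite ?nnegrE ?expR_ge0 //.
    by rewrite addr_ge0 // mulrn_wge0 // invr_ge0 ltW.
  by rewrite -(mulr_natr (n%:R^-1) 3) mulrC; exact: (@expR_ge1Dx R (3 / n%:R)).
by rewrite -expRM_natr mulfVK ?lt0r_neq0.
Qed.


Section F.
Variable R : realType.
Local Notation C := (complex R).

Lemma nsq_rC (x : R) (z : C) : nsq (rC x * z) = rC (x ^+ 2) * nsq z.
Proof.
rewrite /nsq rmorphM /= conj_rC !rCE rmorphXn /= expr2; ring.
Qed.

Lemma p1_nsq (s : 'I_4) a : (0 <= nsq (pauli1 R s a a)) && (nsq (pauli1 R s a a) <= 1).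
Proof.
rewrite /nsq mul_conjC_ge0 /=.
elim/ord4_cases: s; rewrite /pauli1 /=; case: a => /=;
  do 2 rewrite ?rmorph0 ?rmorph1 ?conj_N1 ?mulr0 ?mulr1 ?mulrNN ?ler01 ?lexx //.
Qed.

Lemma nsq_ket (n : nat) (s : {ffun 'I_n -> 'I_4}) (y : 'I_(2 ^ n)) :
  nsq (coef s (ket_bra R y)) <= 1.
Proof.
rewrite /coef mxtrace_mulC tr_delta adjE.
have -> : nsq (Num.conj (pauli R (fun k => s k) y y)) = nsq (pauli R (fun k => s k) y y).
  by rewrite /nsq conjCK mulrC.
rewrite mxE /nsq rmorph_prod -big_split /=.
apply: prodr_ile1 => k _; exact: p1_nsq.
Qed.
End F.

Theorem theorem5 (R : realType) :
  exists c K : R, 0 < c /\ 0 < K /\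
  forall (n : nat) (g : R), (0 < n)%N -> 0 < g -> g <= 1 ->
  forall (d : nat), c * ln (n%:R) / g <= d%:R ->
  forall (Us : nat -> 'M[complex R]_(2 ^ n)),
    (forall t : nat, (1 <= t <= d)%N -> clifford (Us t)) ->
  forall U : 'M[complex R]_(2 ^ n), unitary U ->
    avg_collision g Us d U <= rC (K / (2 ^ n)%:R).
Proof.
exists 1, (expR 3); split; first exact: ltr01.
split; first exact: expR_gt0.
move=> n g hn hg hg1 d hd Us hUs U hU.
pose S := {ffun 'I_n -> 'I_4}.
have H : forall t : nat, exists ph : S -> S, (1 <= t <= d)%N ->
    injective ph /\ forall s A, nsq (coef (ph s) (uconj (Us t) A)) = nsq (coef s A).
  move=> t; case: (boolP (1 <= t <= d)%N) => ht.
    by have [ph [h1 h2]] := clifford_perm (hUs t ht); exists ph.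
  by exists id.
have [ph Hph] := boolp.choice H.
pose sig := fix sig (t : nat) : S -> S :=
  if t is t'.+1 then (fun s => ph t'.+1 (sig t' s)) else id.
have traj : forall t, (t <= d)%N -> injective (sig t) /\
    forall (y : 'I_(2 ^ n)) (s : S),
    nsq (coef (sig t s) (noisy g Us t (ket_bra R y))) =
    rC (\prod_(j < t.+1) wt ((1 - g) ^+ 2) (sig j s)) * nsq (coef s (ket_bra R y)).
  elim=> [|t IH] ht.
    split => // y s; rewrite big_ord1 /= coef_depol nsq_rC wtX //.
  have [inj IHe] := IH (ltnW ht).
  have ht' : (1 <= t.+1 <= d)%N by [].
  have [phinj phe] := Hph t.+1 ht'.
  split; first by move=> a b /= /phinj /inj.
  move=> y s /=; rewrite coef_depol nsq_rC phe IHe [in RHS]big_ord_recr /= wtX.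
  by rewrite !rCE rmorphM /= mulrA [X in X * _ = _]mulrC.
have [injd trajd] := traj d (leqnn d).
have hN : ((2 ^ n)%:R : complex R) != 0 by rewrite pnatr_eq0 -lt0n expn_gt0.
have key : forall y, \sum_x outprob g Us d U y x ^+ 2 <= ((2 ^ n)%:R)^-1 * rC (expR 3).
  move=> y; under eq_bigr => x _ do rewrite outprobE.
  apply: le_trans (collision_bound hU (herm_noisy g Us d y)) _.
  apply: ler_wpM2l; first by rewrite invr_ge0 ler0n.
  rewrite (reindex_inj injd) /=.
  under eq_bigr => s _ do rewrite trajd.
  apply: le_trans (_ : \sum_(s : S) rC (\prod_(j < d.+1) wt ((1 - g) ^+ 2) (sig j s)) <= _).
    apply: ler_sum => s _; rewrite -[X in _ <= X]mulr1; apply: ler_wpM2l.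
      by rewrite rCE ler0c; apply: prodr_ge0 => j _; apply: wt_ge0; apply: sqr_ge0.
    exact: nsq_ket.
  under eq_bigr => s _ do rewrite rCE.
  rewrite rCE -rmorph_sum lecR.
  apply: le_trans (traj_bound (x:=(1-g)^+2) (sqr_ge0 _) (fun j hj => (traj j hj).1)) _.
  exact: exp_bound.
rewrite /avg_collision.
apply: le_trans (ler_wpM2l _ (ler_sum _ (fun y _ => key y))) _.
  by rewrite invr_ge0 ler0n.
rewrite sumr_const card_ord -(mulr_natl ((2 ^ n)%:R^-1 * rC (expR 3)) (2 ^ n)%N) mulrA divff // mul1r.
by rewrite !rCE fmorph_div rmorph_nat mulrC.
Qed.
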